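(* Let $\mathcal{S}=\mathcal{V}\cup\{m\}$ with $m$ a mask state, and let $\alpha_t$ be a differentiable noise schedule on $[0,T]$ with $\alpha_0=1$, $\alpha_T=0$, $\alpha_t\in(0,1)$ and $\alpha_t'<0$ for $t\in(0,T)$. Consider the masked (absorbing) forward CTMC with rates $R_t(i,j)=-\frac{\alpha_t'}{\alpha_t}(e_j^\top e_m)\mathbf{1}_{\{i\ne m\}}$ ($i\ne j$), so that $q_{t|0}(\cdot\mid x_0)=\alpha_t x_0+(1-\alpha_t)e_m$ for $x_0\in\mathcal{V}$ (identified with its one-hot vector), with $p_{\text{data}}$ supported on $\mathcal{V}$. Let $x_\theta=x_\theta(x_t,t)$ be a probability vector on $\mathcal{V}$ and set $\gamma_t:=-\frac{\alpha_t'}{1-\alpha_t}$ and model rates $R^\theta_t(i,j)=\gamma_t\,e_j^\top(x_\theta-e_m)\mathbf{1}_{\{i=m\}}$, i.e. $\lambda^\theta_t(m)=\gamma_t$, $r^\theta_t(j\mid m)=e_j^\top x_\theta$ for $j\in\mathcal{V}$, and $R^\theta_t(i,\cdot)=0$ for $i\ne m$. Then \[ \mathcal{L}_{\mathrm{cond}}(\theta)=\mathbb{E}_{t\sim\mathcal{U}(0,T),\,x_0\sim p_{\text{data}},\,x_t\sim q_{t|0}(\cdot\mid x_0)}\Bigl[\frac{\alpha_t'}{1-\alpha_t}\,x_0^\top\log x_\theta\cdot\mathbf{1}_{\{x_t=m\}}\Bigr], \] where \[ \mathcal{L}_{\mathrm{cond}}(\theta):=\mathbb{E}_{t,\,x_0,\,i\sim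 q_{t|0}(\cdot\mid x_0)}\Bigl[\sum_{j\ne i}R^\theta_t(i,j)-\sum_{j\ne i}R_t(j,i)\frac{q_{t|0}(j\mid x_0)}{q_{t|0}(i\mid x_0)}\log\frac{R^\theta_t(i,j)}{R_t(j,i)}+\sum_{j\ne i}R_t(j,i)K\Bigl(\frac{q_{t|0}(j\mid x_0)}{q_{t|0}(i\mid x_0)}\Bigr)\Bigr] \] with $K(a)=a(\log a-1)$.
   Context: $e_j$ denotes the one-hot vector of state $j$; $\log x_\theta$ is taken componentwise. Terms with zero rate multiplying are interpreted via the convention $0\log0=0$ (so states $i\ne m$ contribute zero). *)

(* Defs.v *)
From HB Require Import structures.
From mathcomp Require Import all_boot all_order all_algebra.
From mathcomp Require Import all_classical all_reals all_analysis.
Set Implicit Arguments. Unset Strict Implicit. Unset Printing Implicit Defensive.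
Import Order.TTheory GRing.Theory Num.Theory.
Local Open Scope ring_scope.

(* State space S = V ∪ {m}, encoded as [option V]; the mstate state m is [None]. *)
Definition mstate {V : finType} : option V := None.

Definition onehot {V : finType} {R : realType} (i j : option V) : R :=
  (i == j)%:R.

(* extended logarithm: log of a nonnegative real, log 0 = -oo *)
Definition elog {R : realType} (x : R) : \bar R := lne x%:E.

Definition qt0 {V : finType} {R : realType} (alpha : R -> R) (t : R)
  (x0 : V) (i : option V) : R :=
  alpha t * onehot (Some x0) i + (1 - alpha t) * onehot mstate i.

Definition Rfwd {V : finType} {R : realType} (alpha : R -> R) (t : R)
  (i j : option V) : R :=
  - (derive1 alpha t / alpha t) * onehot j mstate * (i != mstate)%:R.

Definition gam {R : realType} (alpha : R -> R) (t : R) : R :=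
  - (derive1 alpha t / (1 - alpha t)).

Definition xthS {V : finType} {R : realType} (xth : option V -> R -> V -> R)
  (xt : option V) (t : R) (j : option V) : R :=
  match j with Some v => xth xt t v | None => 0 end.

(* model rates R^theta_t(i,j) = gamma_t e_j^T (x_theta - e_m) 1_{i = m},
   with x_theta = x_theta(x_t, t) evaluated at the current state x_t = i *)
Definition Rmod {V : finType} {R : realType} (alpha : R -> R)
  (xth : option V -> R -> V -> R) (t : R) (i j : option V) : R :=
  gam alpha t * (xthS xth i t j - onehot mstate j) * (i == mstate)%:R.

(* K(a) = a (log a - 1), with 0 log 0 = 0 *)
Definition Kfun {R : realType} (a : R) : \bar R := (a%:E * (elog a - 1%E))%E.

Definition Lcond_integrand {V : finType} {R : realType} (alpha : R -> R)
  (xth : option V -> R -> V -> R) (t : R) (x0 : V) (i : option V) : \bar R :=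
  (\sum_(j | j != i) (Rmod alpha xth t i j)%:E
   - \sum_(j | j != i)
       (Rfwd alpha t j i * (qt0 alpha t x0 j / qt0 alpha t x0 i))%:E
       * elog (Rmod alpha xth t i j / Rfwd alpha t j i)
   + \sum_(j | j != i)
       (Rfwd alpha t j i)%:E * Kfun (qt0 alpha t x0 j / qt0 alpha t x0 i))%E.

Definition expect {V : finType} {R : realType} (T : R) (p : V -> R)
  (alpha : R -> R) (F : R -> V -> option V -> \bar R) : \bar R :=
  ((T^-1)%:E * \int[lebesgue_measure]_(t in `]0%R, T[%classic)
      \sum_(x0 : V) (p x0)%:E *
        \sum_(i : option V) (qt0 alpha t x0 i)%:E * F t x0 i)%E.

Definition Lcond {V : finType} {R : realType} (T : R) (p : V -> R)
  (alpha : R -> R) (xth : option V -> R -> V -> R) : \bar R :=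
  expect T p alpha (Lcond_integrand alpha xth).

(* Main.v *)
Require Import Defs.
From HB Require Import structures.
From mathcomp Require Import all_boot all_order all_algebra.
From mathcomp Require Import all_classical all_reals all_analysis.
From mathcomp Require Import ring lra.
Import Order.TTheory GRing.Theory Num.Theory numFieldNormedType.Exports.
Local Open Scope ring_scope.
Lemma sum_some (V : finType) (R : realType) (F : option V -> \bar R) :
  (\sum_(j | j != None) F j = \sum_(v : V) F (Some v))%E.
Proof.
rewrite (reindex_omap Some id) /=; last by case.
by apply: eq_bigl => v; rewrite eqxx.
Qed.

Lemma pt (V : finType) (R : realType) (alpha : R -> R)
  (xth : option V -> R -> V -> R) t x0 i :
  0 < alpha t < 1 -> derive1 alpha t < 0 ->
  (forall xt t v, 0 <= xth xt t v) ->
  (forall xt t, \sum_(v : V) xth xt t v = 1) ->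
  ((qt0 alpha t x0 i)%:E * Lcond_integrand alpha xth t x0 i =
  (qt0 alpha t x0 i)%:E * ((derive1 alpha t / (1 - alpha t))%:E
     * (\sum_(v : V) (onehot (Some x0) (Some v))%:E * elog (xth i t v))
     * ((i == mstate)%:R)%:E))%E.
Proof.
move=> /andP[a0 a1] d0 xge0 xsum.
case: i => [v|].
  rewrite /= mule0 mule0.
  suff -> : Lcond_integrand alpha xth t x0 (Some v) = 0%E by rewrite mule0.
  rewrite /Lcond_integrand.
  rewrite big1 ?big1 ?[X in (_ - X)%E]big1 ?subee ?adde0 //.
  - by move=> j _; rewrite /Rfwd /onehot /= !(mulr0, mul0r) mul0e.
  - by move=> j _; rewrite /Rfwd /onehot /= !(mulr0, mul0r) mul0e.
  - by move=> j _; rewrite /Rmod /= mulr0.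
rewrite /qt0 /onehot /= mulr0 add0r mulr1 mule1; congr (_ * _)%E.
rewrite /Lcond_integrand !sum_some.
set A := alpha t. set D : R := derive1 alpha t.
have D0 : D != 0 by rewrite lt_eqF.
have S1 : (\sum_v (Rmod alpha xth t None (Some v))%:E = (gam alpha t)%:E)%E.
  rewrite sumEFin; congr (_%:E).
  rewrite /Rmod /xthS /onehot /=.
  under eq_bigr do rewrite subr0 mulr1.
  by rewrite -mulr_sumr xsum mulr1.
have Rf (v : V) : Rfwd alpha t (Some v) None = - (D / A) by rewrite /Rfwd /onehot /= !mulr1.
have gE : gam alpha t = - (D / (1 - A)) by [].
have Rm v : Rmod alpha xth t None (Some v) = - (D / (1 - A)) * xth None t v.
  by rewrite /Rmod /xthS /onehot /= subr0 mulr1 gE.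
have q1 v : qt0 alpha t x0 (Some v) = A * (x0 == v)%:R.
  by rewrite /qt0 /onehot /= mulr0 addr0.
have q0 : qt0 alpha t x0 None = 1 - A.
  by rewrite /qt0 /onehot /= mulr0 add0r mulr1.
have A0 : A != 0 by rewrite gt_eqF.
have Ap : 0 < A by [].
have Al : A < 1 by [].
have Dn : D < 0 by [].
have A1 : 1 - A != 0 by rewrite subr_eq0 eq_sym lt_eqF.
rewrite S1 gE; clear S1 gE.
clearbody A D.
have S2 : (\sum_v ((Rfwd alpha t (Some v) None *
        (qt0 alpha t x0 (Some v) / qt0 alpha t x0 None))%:E *
       elog (Rmod alpha xth t None (Some v) / Rfwd alpha t (Some v) None))
    = (- (D / (1 - A)))%:E * elog (A / (1 - A) * xth None t x0))%E.
  rewrite (bigD1 x0) //= big1 ?adde0.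
    rewrite Rf Rm q1 q0 eqxx mulr1; congr (_%:E * elog _)%E.
      by field; rewrite ?oppr_eq0 ?mulf_neq0 ?invr_neq0 ?A0 ?A1 ?D0.
    by field; rewrite ?oppr_eq0 ?mulf_neq0 ?invr_neq0 ?A0 ?A1 ?D0.
  move=> v vx; rewrite q1 eq_sym (negbTE vx) mulr0 mul0r mulr0 mul0e //.
have S3 : (\sum_v ((Rfwd alpha t (Some v) None)%:E *
       Kfun (qt0 alpha t x0 (Some v) / qt0 alpha t x0 None))
    = (- (D / A))%:E * Kfun (A / (1 - A)))%E.
  rewrite (bigD1 x0) //= big1 ?adde0.
    by rewrite Rf q1 q0 eqxx mulr1.
  move=> v vx; rewrite q1 eq_sym (negbTE vx) mulr0 mul0r /Kfun mul0e mule0 //.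
have S4 : (\sum_v (((Some x0 == Some v)%:R)%:E * elog (xth None t v))
    = elog (xth None t x0))%E.
  rewrite (bigD1 x0) //= big1 ?adde0.
    by rewrite eqxx mul1e.
  by move=> v vx; rewrite (_ : (Some x0 == Some v) = false) ?mul0e // eq_sym; apply/negbTE.
rewrite S2 S3 S4.
have ap : 0 < A / (1 - A) by rewrite divr_gt0 // subr_gt0.
have gp : 0 < - (D / (1 - A)) by rewrite oppr_gt0 pmulr_llt0 // invr_gt0 subr_gt0.
have gn : D / (1 - A) < 0 by rewrite -oppr_gt0.
have rp : 0 < - (D / A) by rewrite oppr_gt0 pmulr_llt0 // invr_gt0.
have -> : Kfun (A / (1 - A)) = (A / (1 - A) * (ln (A / (1 - A)) - 1))%:E.
  by rewrite /Kfun /elog lne_EFin.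
have := xge0 None t x0; move: (xth None t x0) => x.
rewrite le_eqVlt => /orP[/eqP<-|xp].
  rewrite mulr0 /elog /= lexx gt0_muleNy ?lte_fin // lt0_muleNy ?lte_fin //.
rewrite /elog (lne_EFin xp) (lne_EFin (mulr_gt0 ap xp)).
rewrite -!EFinM -EFinB -EFinD !lnM ?posrE ?invr_gt0 ?subr_gt0 //; congr (_%:E).
by field; rewrite ?A0 ?A1.
Qed.



Theorem corollary4p10 (V : finType) (R : realType) (T : R) (alpha : R -> R)
  (p : V -> R) (xth : option V -> R -> V -> R) :
  0 < T ->
  {within `[0%R, T], continuous alpha}%classic ->
  (forall t, 0 < t < T -> derivable alpha t 1) ->
  alpha 0 = 1 -> alpha T = 0 ->
  (forall t, 0 < t < T -> 0 < alpha t < 1) ->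
  (forall t, 0 < t < T -> derive1 alpha t < 0) ->
  (forall x0, 0 <= p x0) -> \sum_(x0 : V) p x0 = 1 ->
  (forall xt t v, 0 <= xth xt t v) ->
  (forall xt t, \sum_(v : V) xth xt t v = 1) ->
  Lcond T p alpha xth =
  expect T p alpha (fun t x0 xt =>
    ((derive1 alpha t / (1 - alpha t))%:E
     * (\sum_(v : V) (onehot (Some x0) (Some v))%:E * elog (xth xt t v))
     * ((xt == mstate)%:R)%:E)%E).
Proof.
move=> T0 _ _ _ _ ha hd _ _ xge0 xsum.
rewrite /Lcond /expect; congr (_ * _)%E.
apply: eq_integral => t; rewrite inE /= in_itv /= => tI.
apply: eq_bigr => x0 _; congr (_ * _)%E.
apply: eq_bigr => i _; apply: pt => //; [exact: ha | exact: hd].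
Qed.
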